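(* Let $L$ and $M$ be finite-dimensional stem Lie superalgebras that are isoclinic. Then there exists a factor set $r$ on $L$ such that $M\cong (Z(L),L/Z(L),r)$.
   Context: Lie superalgebras over a field of characteristic $\neq 2,3$: $\mathbb{Z}_2$-graded algebras with graded skew-symmetric bracket satisfying the graded Jacobi identity; homomorphisms are even. $Z(L)$ is the center, $L'=[L,L]$; $L$ is stem if $Z(L)\subseteq L'$. $L,M$ are isoclinic if there are isomorphisms $\varphi:L/Z(L)\to M/Z(M)$, $\theta:L'\to M'$ with $\theta([l,m])=[k,r]$ whenever $k+Z(M)=\varphi(l+Z(L))$, $r+Z(M)=\varphi(m+Z(L))$. A factor set on $L$ is a bilinear map $r:L/Z(L)\times L/Z(L)\to Z(L)$ with, for homogeneous $\bar a,\bar b,\bar c$: $r(\bar a,\bar b)\in Z(L)_{|\bar a|+|\bar b|}$; $r(\bar a,\bar b)=-(-1)^{|\bar a||\bar b|}r(\bar b,\bar a)$; $r([\bar a,\bar b],\bar c)=r(\bar a,[\bar b,\bar c])-(-1)^{|\bar a||\bar b|}r(\bar b,[\bar a,\bar c])$. $(Z(L),L/Z(L),r)$ is the Lie superalgebra of pairs $(x,\bar a)$, $x\in Z(L)$, $\bar a\in L/Z(L)$, graded componentwise, with componentwise addition and bracket $[(x_1,\bar a),(x_2,\bar b)]=(r(\bar a,\bar b),[\bar a,\bar b])$. *)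

(* Defs.v *)
From HB Require Import structures.
From mathcomp Require Import all_boot all_order all_algebra.

Set Implicit Arguments.
Unset Strict Implicit.
Unset Printing Implicit Defensive.

Import GRing.Theory.
Local Open Scope ring_scope.

Record lieSuper (K : fieldType) := LieSuper {
  lsT : vectType K;
  ls0 : {vspace lsT};
  ls1 : {vspace lsT};
  lsbr : lsT -> lsT -> lsT
}.
Arguments lsT {K} l.
Arguments ls0 {K} l.
Arguments ls1 {K} l.
Arguments lsbr {K} l _ _.

Section LieSuper.
Variable K : fieldType.

(* the homogeneous component of degree b (false = even, true = odd) *)
Definition lsdeg (L : lieSuper K) (b : bool) : {vspace lsT L} :=
  if b then ls1 L else ls0 L.

Definition sgn (a b : bool) : K := if a && b then -1 else 1.

Definition lin (U V : lmodType K) (f : U -> V) : Prop :=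
  forall (a : K) (x y : U), f (a *: x + y) = a *: f x + f y.

Definition is_lie_super (L : lieSuper K) : Prop :=
  (ls0 L + ls1 L = fullv)%VS /\ (ls0 L :&: ls1 L = 0)%VS /\
  (forall (a : K) (x y z : lsT L),
      lsbr L (a *: x + y) z = a *: lsbr L x z + lsbr L y z) /\
  (forall (a : K) (x y z : lsT L),
      lsbr L z (a *: x + y) = a *: lsbr L z x + lsbr L z y) /\
  (forall (a b : bool) (x y : lsT L), x \in lsdeg L a -> y \in lsdeg L b ->
      lsbr L x y \in lsdeg L (a (+) b)) /\
  (forall (a b : bool) (x y : lsT L), x \in lsdeg L a -> y \in lsdeg L b ->
      lsbr L x y = - (sgn a b *: lsbr L y x)) /\
  (forall (a b c : bool) (x y z : lsT L),
      x \in lsdeg L a -> y \in lsdeg L b -> z \in lsdeg L c ->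
      sgn a c *: lsbr L x (lsbr L y z) + sgn b a *: lsbr L y (lsbr L z x)
        + sgn c b *: lsbr L z (lsbr L x y) = 0).

Definition center (L : lieSuper K) (x : lsT L) : Prop :=
  forall y, lsbr L x y = 0.
Arguments center : clear implicits.

Definition derived (L : lieSuper K) (x : lsT L) : Prop :=
  exists s : seq (K * (lsT L * lsT L)),
    x = \sum_(p <- s) p.1 *: lsbr L p.2.1 p.2.2.
Arguments derived : clear implicits.

Definition stem (L : lieSuper K) : Prop :=
  forall x, center L x -> derived L x.

Definition ls_hom (L M : lieSuper K) (f : lsT L -> lsT M) : Prop :=
  lin f /\
  (forall b x, x \in lsdeg L b -> f x \in lsdeg M b) /\
  (forall x y, f (lsbr L x y) = lsbr M (f x) (f y)).

Definition ls_iso (L M : lieSuper K) (f : lsT L -> lsT M) : Prop :=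
  ls_hom f /\ injective f /\ (forall y, exists x, f x = y).

(* (Q, pi) is the quotient Lie superalgebra L/Z(L) with its canonical
   projection: Q is a Lie superalgebra and pi : L -> Q is a surjective
   homomorphism whose kernel is exactly Z(L). *)
Definition center_quotient (L Q : lieSuper K) (pi : lsT L -> lsT Q) : Prop :=
  is_lie_super Q /\ ls_hom pi /\ (forall q, exists x, pi x = q) /\
  (forall x, pi x = 0 <-> center L x).

(* th : L' -> M' is an isomorphism of Lie superalgebras (only the
   values of th on L' matter). *)
Definition derived_iso (L M : lieSuper K) (th : lsT L -> lsT M) : Prop :=
  (forall a x y, derived L x -> derived L y ->
      th (a *: x + y) = a *: th x + th y) /\
  (forall x, derived L x -> derived M (th x)) /\
  (forall x y, derived L x -> derived L y -> th x = th y -> x = y) /\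
  (forall w, derived M w -> exists x, derived L x /\ th x = w) /\
  (forall b x, derived L x -> x \in lsdeg L b -> th x \in lsdeg M b) /\
  (forall x y, derived L x -> derived L y ->
      th (lsbr L x y) = lsbr M (th x) (th y)).

Definition isoclinic (L M : lieSuper K) : Prop :=
  exists (QL QM : lieSuper K) (piL : lsT L -> lsT QL) (piM : lsT M -> lsT QM)
         (phi : lsT QL -> lsT QM) (th : lsT L -> lsT M),
    center_quotient piL /\ center_quotient piM /\ ls_iso phi /\
    derived_iso th /\
    (forall l m k r, piM k = phi (piL l) -> piM r = phi (piL m) ->
        th (lsbr L l m) = lsbr M k r).

(* Factor set on L, where Q plays the role of L/Z(L) (cf. center_quotient). *)
Definition factor_set (L Q : lieSuper K) (r : lsT Q -> lsT Q -> lsT L) : Prop :=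
  (forall a x y z, r (a *: x + y) z = a *: r x z + r y z) /\
  (forall a x y z, r z (a *: x + y) = a *: r z x + r z y) /\
  (forall x y, center L (r x y)) /\
  (forall (a b : bool) x y, x \in lsdeg Q a -> y \in lsdeg Q b ->
      r x y \in lsdeg L (a (+) b)) /\
  (forall (a b : bool) x y, x \in lsdeg Q a -> y \in lsdeg Q b ->
      r x y = - (sgn a b *: r y x)) /\
  (forall (a b c : bool) x y z,
      x \in lsdeg Q a -> y \in lsdeg Q b -> z \in lsdeg Q c ->
      r (lsbr Q x y) z = r x (lsbr Q y z) - sgn a b *: r y (lsbr Q x z)).

(* f : M -> Z(L) x Q is an isomorphism of Lie superalgebras onto
   (Z(L), Q, r): the pairs (x, q) with x in Z(L), graded componentwise
   ((Z(L),Q,r)_b = (Z(L) :&: L_b) x Q_b), with bracket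
   [(x1,a),(x2,b)] = (r a b, [a,b]). *)
Definition iso_ZQr (M L Q : lieSuper K) (r : lsT Q -> lsT Q -> lsT L)
    (f : lsT M -> (lsT L * lsT Q)%type) : Prop :=
  lin f /\
  (forall m, center L (f m).1) /\
  injective f /\
  (forall x q, center L x -> exists m, f m = (x, q)) /\
  (forall b m, m \in lsdeg M b ->
      (f m).1 \in lsdeg L b /\ (f m).2 \in lsdeg Q b) /\
  (forall m n, f (lsbr M m n) =
      (r (f m).2 (f n).2, lsbr Q (f m).2 (f n).2)).

End LieSuper.

(* Main.v *)
Require Import Defs.
From HB Require Import structures.
From mathcomp Require Import all_boot all_order all_algebra.
From Stdlib Require Import ClassicalEpsilon.

Set Implicit Arguments.
Unset Strict Implicit.
Unset Printing Implicit Defensive.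
Import GRing.Theory.
Local Open Scope ring_scope.

Section Aux.
Variable K : fieldType.

Lemma lin_add (U V : lmodType K) (h : U -> V) : lin h -> forall x y, h (x + y) = h x + h y.
Proof. by move=> H x y; have := H 1 x y; rewrite !scale1r. Qed.

Lemma lin0 (U V : lmodType K) (h : U -> V) : lin h -> h 0 = 0.
Proof.
move=> H; have e := lin_add H 0 0; rewrite addr0 in e.
by apply: (addrI (h 0)); rewrite addr0 -e.
Qed.

Lemma linZ (U V : lmodType K) (h : U -> V) : lin h -> forall a x, h (a *: x) = a *: h x.
Proof. by move=> H a x; have := H a x 0; rewrite addr0 lin0 // addr0. Qed.

Lemma linN (U V : lmodType K) (h : U -> V) : lin h -> forall x, h (- x) = - h x.
Proof. by move=> H x; rewrite -scaleN1r linZ // scaleN1r. Qed.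

Lemma linB (U V : lmodType K) (h : U -> V) : lin h -> forall x y, h (x - y) = h x - h y.
Proof. by move=> H x y; rewrite lin_add // linN. Qed.

Definition grd (X : lieSuper K) := (ls0 X + ls1 X = fullv)%VS /\ (ls0 X :&: ls1 X = 0)%VS.

Lemma lie_grd (X : lieSuper K) : is_lie_super X -> grd X.
Proof. by case=> h1 [h2 _]. Qed.

Lemma brl (X : lieSuper K) z : is_lie_super X -> lin (fun x => lsbr X x z).
Proof. by case=> _ [_ [h _]] a x y; apply: h. Qed.

Lemma brr (X : lieSuper K) z : is_lie_super X -> lin (lsbr X z).
Proof. by case=> _ [_ [_ [h _]]] a x y; apply: h. Qed.

Definition dec (X : lieSuper K) (x : lsT X) : lsT X * lsT X :=
  epsilon (inhabits (0,0)) (fun p => p.1 \in ls0 X /\ p.2 \in ls1 X /\ x = p.1 + p.2).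

Definition pr (X : lieSuper K) (b : bool) (x : lsT X) := if b then (dec x).2 else (dec x).1.

Lemma dec_spec (X : lieSuper K) (x : lsT X) : grd X ->
  (dec x).1 \in ls0 X /\ (dec x).2 \in ls1 X /\ x = (dec x).1 + (dec x).2.
Proof.
case=> h _.
have : x \in (ls0 X + ls1 X)%VS by rewrite h memvf.
case/memv_addP => u Hu [v Hv E].
have ex : exists p : lsT X * lsT X, p.1 \in ls0 X /\ p.2 \in ls1 X /\ x = p.1 + p.2.
  by exists (u, v).
exact: (epsilon_spec (inhabits (0,0)) _ ex).
Qed.

Lemma dsum_uniq (X : lieSuper K) (u0 u1 v0 v1 : lsT X) : grd X -> u0 \in ls0 X -> u1 \in ls1 X ->
  v0 \in ls0 X -> v1 \in ls1 X -> u0 + u1 = v0 + v1 -> u0 = v0 /\ u1 = v1.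
Proof.
case=> _ h H0 H1 H0' H1' E.
have e : u0 - v0 = v1 - u1.
  by apply/eqP; rewrite subr_eq -addrA [- u1 + v0]addrC addrA [v1 + v0]addrC -E addrK.
have : u0 - v0 \in (ls0 X :&: ls1 X)%VS by rewrite memv_cap memvB //= e memvB.
rewrite h memv0 subr_eq0 => /eqP e0; split => //.
by move: e; rewrite e0 subrr => /eqP; rewrite eq_sym subr_eq0 => /eqP.
Qed.

Lemma pr_mem (X : lieSuper K) b (x : lsT X) : grd X -> pr b x \in lsdeg X b.
Proof. by move=> g; have [? [? _]] := dec_spec x g; case: b. Qed.

Lemma pr_sum (X : lieSuper K) (x : lsT X) : grd X -> x = pr false x + pr true x.
Proof. by move=> g; have [? [? ?]] := dec_spec x g. Qed.

Lemma pr_uniq (X : lieSuper K) (u0 u1 : lsT X) : grd X -> u0 \in ls0 X -> u1 \in ls1 X ->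
  pr false (u0 + u1) = u0 /\ pr true (u0 + u1) = u1.
Proof.
move=> g H0 H1; have [h0 [h1 e]] := dec_spec (u0 + u1) g.
by rewrite /pr; have [E0 E1] := dsum_uniq g h0 h1 H0 H1 (esym e); rewrite E0 E1.
Qed.

Lemma pr_homog (X : lieSuper K) b (x : lsT X) : grd X -> x \in lsdeg X b ->
  pr b x = x /\ pr (~~ b) x = 0.
Proof.
move=> g; case: b => H.
  by have := pr_uniq g (mem0v _) H; rewrite add0r => -[-> ->].
by have := pr_uniq g H (mem0v _); rewrite addr0 => -[-> ->].
Qed.

Lemma pr_lin (X : lieSuper K) b : grd X -> lin (@pr X b).
Proof.
move=> g a x y.
have e : a *: x + y = (a *: pr false x + pr false y) + (a *: pr true x + pr true y).
  rewrite {1}(pr_sum x g) {1}(pr_sum y g) scalerDr.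
  by rewrite addrACA.
have m b' (z : lsT X) : a *: pr b' x + pr b' y \in lsdeg X b'.
  by rewrite memvD ?memvZ ?pr_mem.
have [e0 e1] := pr_uniq g (m false x) (m true x).
by rewrite e; case: b.
Qed.

Lemma pr_comm (X Y : lieSuper K) (h : lsT X -> lsT Y) b x : grd X -> grd Y -> lin h ->
  (forall b x, x \in lsdeg X b -> h x \in lsdeg Y b) -> h (pr b x) = pr b (h x).
Proof.
move=> gX gY hl hg; rewrite {2}(pr_sum x gX) lin_add //.
have [e0 e1] := pr_uniq gY (hg false _ (pr_mem false x gX)) (hg true _ (pr_mem true x gX)).
by case: b.
Qed.

End Aux.

Section Aux2.
Variable K : fieldType.
Variable X : lieSuper K.
Hypothesis HX : is_lie_super X.

Let g : grd X := lie_grd HX.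

Lemma br0l z : lsbr X 0 z = 0. Proof. exact: (lin0 (brl z HX)). Qed.
Lemma br0r z : lsbr X z 0 = 0. Proof. exact: (lin0 (brr z HX)). Qed.
Lemma brDl x y z : lsbr X (x + y) z = lsbr X x z + lsbr X y z.
Proof. exact: (lin_add (brl z HX)). Qed.
Lemma brDr x y z : lsbr X z (x + y) = lsbr X z x + lsbr X z y.
Proof. exact: (lin_add (brr z HX)). Qed.
Lemma brZl a x z : lsbr X (a *: x) z = a *: lsbr X x z.
Proof. exact: (linZ (brl z HX)). Qed.
Lemma brZr a x z : lsbr X z (a *: x) = a *: lsbr X z x.
Proof. exact: (linZ (brr z HX)). Qed.
Lemma brNl x z : lsbr X (- x) z = - lsbr X x z.
Proof. exact: (linN (brl z HX)). Qed.
Lemma brNr x z : lsbr X z (- x) = - lsbr X z x.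
Proof. exact: (linN (brr z HX)). Qed.
Lemma brBl x y z : lsbr X (x - y) z = lsbr X x z - lsbr X y z.
Proof. exact: (linB (brl z HX)). Qed.
Lemma brBr x y z : lsbr X z (x - y) = lsbr X z x - lsbr X z y.
Proof. exact: (linB (brr z HX)). Qed.

Lemma br_deg a b x y : x \in lsdeg X a -> y \in lsdeg X b -> lsbr X x y \in lsdeg X (a (+) b).
Proof. by case: HX => _ [_ [_ [_ [h _]]]]; apply: h. Qed.

Lemma br_anti a b x y : x \in lsdeg X a -> y \in lsdeg X b ->
  lsbr X x y = - (sgn K a b *: lsbr X y x).
Proof. by case: HX => _ [_ [_ [_ [_ [h _]]]]]; apply: h. Qed.

Lemma center_lin a x y : @center _ X x -> @center _ X y -> @center _ X (a *: x + y).
Proof. by move=> hx hy z; rewrite brDl brZl hx hy scaler0 addr0. Qed.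

Lemma center0 : @center _ X 0.
Proof. by move=> z; rewrite br0l. Qed.

Lemma center_pr b x : @center _ X x -> @center _ X (pr b x).
Proof.
move=> hx.
have hom c (y : lsT X) : y \in lsdeg X c -> lsbr X (pr b x) y = 0.
  move=> hy.
  have e : lsbr X (pr false x) y + lsbr X (pr true x) y = 0 + 0.
    by rewrite -brDl -pr_sum // hx addr0.
  have m0 := br_deg (pr_mem false x g) hy.
  have m1 := br_deg (pr_mem true x g) hy.
  case: c hy m0 m1 e => hy m0 m1 e /=.
    rewrite addrC in e.
    by have [E1 E0] := dsum_uniq g m1 m0 (mem0v _) (mem0v _) e; case: b; rewrite ?E0 ?E1.
  by have [E0 E1] := dsum_uniq g m0 m1 (mem0v _) (mem0v _) e; case: b; rewrite ?E0 ?E1.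
move=> y; rewrite (pr_sum y g) brDr (hom false) ?(hom true) ?addr0 //; exact: pr_mem.
Qed.

Lemma center_r x y : @center _ X x -> lsbr X y x = 0.
Proof.
move=> hx.
have hom c (z : lsT X) : z \in lsdeg X c -> lsbr X z x = 0.
  move=> hz; rewrite (pr_sum x g) brDr.
  rewrite (br_anti hz (pr_mem false x g)) (br_anti hz (pr_mem true x g)).
  by rewrite !center_pr // !scaler0 !oppr0 addr0.
by rewrite (pr_sum y g) brDl (hom false) ?(hom true) ?addr0 //; exact: pr_mem.
Qed.

Lemma derived0 : @derived _ X 0.
Proof. by exists [::]; rewrite big_nil. Qed.

Lemma derived_br u v : @derived _ X (lsbr X u v).
Proof. by exists [:: (1, (u, v))]; rewrite big_seq1 scale1r. Qed.

Lemma derived_lin a x y : @derived _ X x -> @derived _ X y -> @derived _ X (a *: x + y).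
Proof.
move=> [s ->] [t ->].
exists ([seq (a * p.1, p.2) | p <- s] ++ t).
rewrite big_cat big_map /= scaler_sumr; congr (_ + _).
by apply: eq_bigr => p _; rewrite scalerA.
Qed.

Lemma sgn_facts (a b c : bool) : sgn K a c * sgn K a c = 1 /\
  sgn K a c * (sgn K b a * sgn K c a) = sgn K a b /\
  sgn K a c * (sgn K c b * sgn K c (a (+) b)) = 1.
Proof.
by case: a; case: b; case: c; rewrite /sgn /= ?mulrNN ?mulr1 ?mul1r ?mulrN1 ?mulN1r ?opprK.
Qed.

Lemma jacobi' a b c x y z : x \in lsdeg X a -> y \in lsdeg X b -> z \in lsdeg X c ->
  lsbr X (lsbr X x y) z = lsbr X x (lsbr X y z) - sgn K a b *: lsbr X y (lsbr X x z).
Proof.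
move=> hx hy hz.
have J : sgn K a c *: lsbr X x (lsbr X y z) + sgn K b a *: lsbr X y (lsbr X z x)
        + sgn K c b *: lsbr X z (lsbr X x y) = 0.
  by case: HX => _ [_ [_ [_ [_ [_ h]]]]]; apply: h.
rewrite (br_anti hz hx) (br_anti hz (br_deg hx hy)) brNr brZr in J.
move: (congr1 (fun v => sgn K a c *: v) J).
rewrite scaler0 !scalerDr !scalerN !scalerA.
have [s1 [s2 s3]] := sgn_facts a b c.
rewrite -!mulrA s1 s2 s3 !scale1r => /eqP; rewrite subr_eq0 => /eqP ->.
by [].
Qed.

End Aux2.

Section Sec.
Variable K : fieldType.

Lemma lin_sum (U V : lmodType K) (h : U -> V) (I : Type) (r : seq I) (F : I -> U) :
  lin h -> h (\sum_(i <- r) F i) = \sum_(i <- r) h (F i).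
Proof.
move=> hl; elim: r => [|i r IH]; first by rewrite !big_nil lin0.
by rewrite !big_cons lin_add // IH.
Qed.

Lemma lin_section (U V : vectType K) (h : U -> V) : lin h ->
  (forall v, exists u, h u = v) -> exists s : V -> U, lin s /\ forall v, h (s v) = v.
Proof.
move=> hl hs.
pose B := vbasis (fullv : {vspace V}).
pose lift v := epsilon (inhabits 0) (fun u => h u = v).
have hlift v : h (lift v) = v by exact: (epsilon_spec (inhabits 0) (fun u => h u = v) (hs v)).
exists (fun v => \sum_(i < \dim (fullv : {vspace V})) coord B i v *: lift B`_i).
split.
  move=> a x y; rewrite scaler_sumr -big_split; apply: eq_bigr => i _.
  by rewrite (coord_is_scalar B i a x y) scalerDl scalerA.
move=> v; rewrite lin_sum //.
rewrite {2}(coord_vbasis (memvf v)); apply: eq_bigr => i _.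
by rewrite linZ // hlift.
Qed.

End Sec.

Lemma lmod_helper (K : fieldType) (V : lmodType K) (a : K) (A B C D : V) :
  (a *: A + B) - (a *: C + D) = a *: (A - C) + (B - D).
Proof. by rewrite scalerBr opprD addrACA. Qed.

Lemma lin_comp (K : fieldType) (U V W : lmodType K) (f : V -> W) (h : U -> V) :
  lin f -> lin h -> lin (fun x => f (h x)).
Proof. by move=> hf hh a x y; rewrite hh hf. Qed.

Lemma lin_plus (K : fieldType) (U V : lmodType K) (f h : U -> V) :
  lin f -> lin h -> lin (fun x => f x + h x).
Proof. by move=> hf hh a x y; rewrite hf hh scalerDr addrACA. Qed.

Section Main.
Variable K : fieldType.
Variables (L M QL QM Q : lieSuper K).
Hypotheses (HL : is_lie_super L) (HM : is_lie_super M) (sL : stem L) (sM : stem M).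
Variables (piL : lsT L -> lsT QL) (piM : lsT M -> lsT QM) (phi : lsT QL -> lsT QM)
  (th : lsT L -> lsT M) (pi : lsT L -> lsT Q).
Hypotheses (cqL : center_quotient piL) (cqM : center_quotient piM) (isop : ls_iso phi)
  (dth : derived_iso th)
  (compat : forall l m k r, piM k = phi (piL l) -> piM r = phi (piL m) ->
        th (lsbr L l m) = lsbr M k r)
  (cq : center_quotient pi).

Let gL := lie_grd HL.
Let gM := lie_grd HM.
Let HQL : is_lie_super QL := proj1 cqL.
Let HQM : is_lie_super QM := proj1 cqM.
Let HQ : is_lie_super Q := proj1 cq.
Let gQL := lie_grd HQL.
Let gQM := lie_grd HQM.
Let gQ := lie_grd HQ.

Lemma hom_parts (X Y : lieSuper K) (h : lsT X -> lsT Y) : ls_hom h ->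
  [/\ lin h, (forall b x, x \in lsdeg X b -> h x \in lsdeg Y b) &
      (forall x y, h (lsbr X x y) = lsbr Y (h x) (h y))].
Proof. by case=> [a [b c]]. Qed.

Lemma cq_parts (X Y : lieSuper K) (h : lsT X -> lsT Y) : center_quotient h ->
  [/\ ls_hom h, (forall q, exists x, h x = q) & (forall x, h x = 0 <-> center x)].
Proof. by case=> [_ [a [b c]]]. Qed.

Definition Rel l m := piM m = phi (piL l).

Lemma phi_parts : [/\ ls_hom phi, injective phi & forall y, exists x, phi x = y].
Proof. by case: isop => [a [b c]]. Qed.

Lemma Rel_ex_l l : exists m, Rel l m.
Proof. by have [_ s _] := cq_parts cqM; apply: s. Qed.

Lemma Rel_ex_r m : exists l, Rel l m.
Proof.
have [_ s _] := cq_parts cqL; have [_ _ s'] := phi_parts.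
have [q hq] := s' (piM m); have [l hl] := s q.
by exists l; rewrite /Rel hl hq.
Qed.

Lemma Rel_lin a l m l' m' : Rel l m -> Rel l' m' -> Rel (a *: l + l') (a *: m + m').
Proof.
have [hM _ _] := cq_parts cqM; have [hL _ _] := cq_parts cqL; have [hp _ _] := phi_parts.
have [lM _ _] := hom_parts hM; have [lL _ _] := hom_parts hL; have [lp _ _] := hom_parts hp.
by rewrite /Rel => e e'; rewrite lM lL lp e e'.
Qed.

Lemma Rel_br l m l' m' : Rel l m -> Rel l' m' -> Rel (lsbr L l l') (lsbr M m m').
Proof.
have [hM _ _] := cq_parts cqM; have [hL _ _] := cq_parts cqL; have [hp _ _] := phi_parts.
have [_ _ bM] := hom_parts hM; have [_ _ bL] := hom_parts hL; have [_ _ bp] := hom_parts hp.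
by rewrite /Rel => e e'; rewrite bM bL bp e e'.
Qed.

Lemma Rel_center l m : Rel l m -> (center l <-> center m).
Proof.
have [_ _ kM] := cq_parts cqM; have [_ _ kL] := cq_parts cqL; have [hp ip _] := phi_parts.
have [lp _ _] := hom_parts hp.
rewrite /Rel => e; split => h.
  by apply/kM; rewrite e (proj2 (kL l) h) lin0.
by apply/kL; apply: ip; rewrite -e (proj2 (kM m) h) lin0.
Qed.

Lemma Rel_pi l l' m : Rel l m -> Rel l' m -> pi l = pi l'.
Proof.
have [hL _ kL] := cq_parts cqL; have [hp ip _] := phi_parts.
have [h _ k] := cq_parts cq.
have [lL _ _] := hom_parts hL; have [l_ _ _] := hom_parts h.
rewrite /Rel => e e'; have e2 : piL l = piL l' by apply: ip; rewrite -e -e'.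
have : center (l - l') by apply/kL; rewrite linB // e2 subrr.
move/k; rewrite linB // => /eqP; rewrite subr_eq0 => /eqP.
done.
Qed.

Lemma Rel_pr b l m : Rel l m -> Rel (pr b l) (pr b m).
Proof.
have [hM _ _] := cq_parts cqM; have [hL _ _] := cq_parts cqL; have [hp _ _] := phi_parts.
have [lM dM _] := hom_parts hM; have [lL dL _] := hom_parts hL; have [lp dp _] := hom_parts hp.
rewrite /Rel => e.
by rewrite (pr_comm _ _ gM gQM lM dM) e (pr_comm _ _ gL gQL lL dL) (pr_comm _ _ gQL gQM lp dp).
Qed.

Definition g m := pi (epsilon (inhabits 0) (fun l => Rel l m)).

Lemma g_spec l m : Rel l m -> g m = pi l.
Proof.
move=> h; apply: (Rel_pi _ h).
exact: (epsilon_spec (inhabits 0) (fun l => Rel l m) (Rel_ex_r m)).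
Qed.

Lemma g_lin : lin g.
Proof.
have [h _ _] := cq_parts cq; have [l_ _ _] := hom_parts h.
move=> a m n; have [lm hm] := Rel_ex_r m; have [ln hn] := Rel_ex_r n.
by rewrite (g_spec (Rel_lin a hm hn)) (g_spec hm) (g_spec hn) l_.
Qed.

Lemma g_br m n : g (lsbr M m n) = lsbr Q (g m) (g n).
Proof.
have [h _ _] := cq_parts cq; have [_ _ b_] := hom_parts h.
have [lm hm] := Rel_ex_r m; have [ln hn] := Rel_ex_r n.
by rewrite (g_spec (Rel_br hm hn)) (g_spec hm) (g_spec hn) b_.
Qed.

Lemma g_ker m : g m = 0 <-> center m.
Proof.
have [_ _ k] := cq_parts cq.
have [l hl] := Rel_ex_r m; rewrite (g_spec hl) k; exact: Rel_center.
Qed.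

Lemma g_surj q : exists m, g m = q.
Proof.
have [_ s _] := cq_parts cq; have [l <-] := s q; have [m hm] := Rel_ex_l l.
by exists m; rewrite (g_spec hm).
Qed.

Lemma g_deg b m : m \in lsdeg M b -> g m \in lsdeg Q b.
Proof.
have [h _ _] := cq_parts cq; have [_ d_ _] := hom_parts h.
move=> hm; have [l hl] := Rel_ex_r m.
have := Rel_pr b hl; rewrite (proj1 (pr_homog gM hm)) => /g_spec ->.
by apply: d_; apply: pr_mem.
Qed.



Lemma th_parts :
  [/\ (forall a x y, derived x -> derived y -> th (a *: x + y) = a *: th x + th y),
      (forall x y, derived x -> derived y -> th x = th y -> x = y),
      (forall w, derived w -> exists x, derived x /\ th x = w) &
      (forall b x, derived x -> x \in lsdeg L b -> th x \in lsdeg M b)].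
Proof. by case: dth => [a [_ [c [d [e _]]]]]. Qed.

Lemma th0 : th 0 = 0.
Proof.
have [tl _ _ _] := th_parts.
have := tl 1 _ _ (derived0 L) (derived0 L); rewrite !scale1r addr0 => e.
by apply: (addrI (th 0)); rewrite addr0 -e.
Qed.

Lemma th_key x l y : derived x -> Rel l y -> th (lsbr L x l) = lsbr M (th x) y.
Proof.
have [tl _ _ _] := th_parts.
move=> [s ->] hy; elim: s => [|p s IH].
  by rewrite big_nil br0l // th0 br0l.
rewrite big_cons brDl // brZl //.
have dS : derived (\sum_(j <- s) j.1 *: lsbr L j.2.1 j.2.2) by exists s.
rewrite tl; [|exact: derived_br|exact: derived_br].
rewrite IH tl; [|exact: derived_br|exact: dS].
have [k hk] := Rel_ex_l p.2.1; have [r hr] := Rel_ex_l p.2.2.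
rewrite (compat hk hr) (compat (Rel_br hk hr) hy).
by rewrite brDl // brZl.
Qed.

Lemma th_center x : center x -> center (th x).
Proof.
move=> hx y; have [l hl] := Rel_ex_r y.
by rewrite -(th_key (sL hx) hl) hx th0.
Qed.

Lemma th_center_inv w : center w -> exists x, center x /\ th x = w.
Proof.
have [_ ti to _] := th_parts.
move=> hw; have [x [dx ex]] := to w (sM hw).
exists x; split => // l.
have [y hy] := Rel_ex_l l.
apply: ti; [exact: derived_br | exact: derived0 | ].
by rewrite (th_key dx hy) ex hw th0.
Qed.

Lemma th_inj_center x y : center x -> center y -> th x = th y -> x = y.
Proof. by have [_ ti _ _] := th_parts; move=> hx hy; apply: ti; apply: sL. Qed.

Definition Zinv w := epsilon (inhabits 0) (fun x => center x /\ th x = w).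

Lemma Zinv_spec w : center w -> center (Zinv w) /\ th (Zinv w) = w.
Proof.
move=> hw; exact: (epsilon_spec (inhabits 0) (fun x => center x /\ th x = w) (th_center_inv hw)).
Qed.

Lemma Zinv_th x : center x -> Zinv (th x) = x.
Proof.
move=> hx; have [h1 h2] := Zinv_spec (th_center hx).
exact: th_inj_center.
Qed.

Lemma Zinv0 : Zinv 0 = 0.
Proof. by rewrite -th0 Zinv_th //; apply: center0. Qed.

Lemma Zinv_lin a w w' : center w -> center w' -> Zinv (a *: w + w') = a *: Zinv w + Zinv w'.
Proof.
have [tl _ _ _] := th_parts.
move=> hw hw'; have [c1 e1] := Zinv_spec hw; have [c2 e2] := Zinv_spec hw'.
have hc : center (a *: w + w') by apply: center_lin.
have [c3 e3] := Zinv_spec hc.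
apply: th_inj_center => //; first by apply: center_lin.
by rewrite e3 tl ?e1 ?e2 //; apply: sL.
Qed.

Lemma ZinvN c w : center w -> Zinv (- (c *: w)) = - (c *: Zinv w).
Proof.
move=> hw; have := Zinv_lin (- c) hw (center0 HM).
by rewrite !addr0 Zinv0 addr0 !scaleNr.
Qed.

Lemma Zinv_deg b w : center w -> w \in lsdeg M b -> Zinv w \in lsdeg L b.
Proof.
have [tl _ _ td] := th_parts.
move=> hw hb; have [cx ex] := Zinv_spec hw.
set x := Zinv w in cx ex *.
have c0 := center_pr HL false cx; have c1 := center_pr HL true cx.
have ed : w = th (pr false x) + th (pr true x).
  by rewrite -ex {1}(pr_sum x gL) -[pr false x]scale1r tl ?scale1r //; apply: sL.
have m0 := td false _ (sL c0) (pr_mem false x gL).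
have m1 := td true _ (sL c1) (pr_mem true x gL).
have [u0 u1] := pr_uniq gM m0 m1.
have [_ z] := pr_homog gM hb.
have hz : pr (~~ b) x = 0.
  apply: th_inj_center; [exact: center_pr | exact: (center0 HL) | ].
  by rewrite th0 -z ed; case: b {hb z}; rewrite ?u0 ?u1.
have e := pr_sum x gL.
case: b hz {hb z} => hz; rewrite e hz ?addr0 ?add0r; exact: pr_mem.
Qed.



Definition s0 := epsilon (inhabits (fun _ : lsT Q => (0 : lsT M)))
  (fun s : lsT Q -> lsT M => lin s /\ forall q, g (s q) = q).

Lemma s0_spec : lin s0 /\ forall q, g (s0 q) = q.
Proof.
have := lin_section g_lin g_surj.
exact: (epsilon_spec (inhabits (fun _ : lsT Q => (0 : lsT M)))
  (fun s : lsT Q -> lsT M => lin s /\ forall q, g (s q) = q)).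
Qed.

Definition sig q := pr false (s0 (pr false q)) + pr true (s0 (pr true q)).

Lemma sig_lin : lin sig.
Proof.
have [sl _] := s0_spec.
apply: lin_plus; apply: lin_comp; try apply: pr_lin => //;
  apply: lin_comp => //; apply: pr_lin => //.
Qed.

Lemma g_pr b m : g (pr b m) = pr b (g m).
Proof. exact: (pr_comm _ _ gM gQ g_lin g_deg). Qed.

Lemma g_sig q : g (sig q) = q.
Proof.
have [_ ss] := s0_spec.
rewrite /sig (lin_add g_lin) !g_pr !ss.
rewrite (proj1 (pr_homog gQ (pr_mem false q gQ))) (proj1 (pr_homog gQ (pr_mem true q gQ))).
by rewrite -pr_sum.
Qed.

Lemma sig_deg b q : q \in lsdeg Q b -> sig q \in lsdeg M b.
Proof.
have [sl _] := s0_spec.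
move=> hq; have [_ e2] := pr_homog gQ hq.
case: b hq e2 => hq e2; rewrite /sig e2 (lin0 sl) (lin0 (pr_lin _ gM)) ?addr0 ?add0r;
  exact: pr_mem.
Qed.

Lemma cen_d m : center (m - sig (g m)).
Proof. by apply/g_ker; rewrite (linB g_lin) g_sig subrr. Qed.

Lemma cen_r x y : center (lsbr M (sig x) (sig y) - sig (lsbr Q x y)).
Proof. by apply/g_ker; rewrite (linB g_lin) g_br !g_sig subrr. Qed.

Lemma br_cen u v c c' : center c -> center c' -> lsbr M (u + c) (v + c') = lsbr M u v.
Proof.
move=> hc hc'; rewrite (brDl HM) !(brDr HM) !hc (center_r HM u hc').
by rewrite !addr0.
Qed.

Lemma br_sig m n : lsbr M m n = lsbr M (sig (g m)) (sig (g n)).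
Proof.
have em : m = sig (g m) + (m - sig (g m)) by rewrite addrC subrK.
have en : n = sig (g n) + (n - sig (g n)) by rewrite addrC subrK.
by rewrite {1}em {1}en br_cen //; apply: cen_d.
Qed.

Lemma sig_br_e x y : sig (lsbr Q x y) =
  lsbr M (sig x) (sig y) - (lsbr M (sig x) (sig y) - sig (lsbr Q x y)).
Proof. by rewrite opprB addrC subrK. Qed.

Lemma br_sig_l x y w : lsbr M (sig (lsbr Q x y)) w = lsbr M (lsbr M (sig x) (sig y)) w.
Proof. by rewrite sig_br_e (brBl HM) (cen_r x y w) subr0. Qed.

Lemma br_sig_r x y w : lsbr M w (sig (lsbr Q x y)) = lsbr M w (lsbr M (sig x) (sig y)).
Proof. by rewrite sig_br_e (brBr HM) (center_r HM w (cen_r x y)) subr0. Qed.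

Definition rr x y := Zinv (lsbr M (sig x) (sig y) - sig (lsbr Q x y)).
Definition ff m := (Zinv (m - sig (g m)), g m).

Lemma lmod_helper2 (V : lmodType K) (s : K) (P R p r : V) :
  (P - s *: R) - (p - s *: r) = (- s) *: (R - r) + (P - p).
Proof. by rewrite scaleNr scalerBr !opprB [LHS]addrC [RHS]addrC addrACA [RHS]addrACA [P + _]addrC. Qed.

Lemma rr_fs : factor_set rr.
Proof.
split.
  move=> a x y z; rewrite /rr sig_lin (brDl HM) (brZl HM) (brDl HQ) (brZl HQ) sig_lin.
  by rewrite lmod_helper Zinv_lin //; apply: cen_r.
split.
  move=> a x y z; rewrite /rr sig_lin (brDr HM) (brZr HM) (brDr HQ) (brZr HQ) sig_lin.
  by rewrite lmod_helper Zinv_lin //; apply: cen_r.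
split; first by move=> x y; exact: (proj1 (Zinv_spec (cen_r x y))).
split.
  move=> a b x y hx hy; apply: Zinv_deg; first exact: cen_r.
  by rewrite memvB // ?(br_deg HM) ?sig_deg ?(br_deg HQ) //; apply: sig_deg.
split.
  move=> a b x y hx hy; rewrite /rr (br_anti HM (sig_deg hx) (sig_deg hy)) (br_anti HQ hx hy).
  rewrite (linN sig_lin) (linZ sig_lin) -ZinvN; last exact: cen_r.
  by congr Zinv; rewrite opprK scalerBr opprB addrC.
move=> a b c x y z hx hy hz; rewrite /rr br_sig_l br_sig_r br_sig_r.
rewrite (jacobi' HM (sig_deg hx) (sig_deg hy) (sig_deg hz)) (jacobi' HQ hx hy hz).
rewrite (linB sig_lin) (linZ sig_lin).
rewrite lmod_helper2 Zinv_lin.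
- by rewrite scaleNr addrC.
- by rewrite -br_sig_r; apply: cen_r.
- by rewrite -br_sig_r; apply: cen_r.
Qed.


Lemma ff_iso : iso_ZQr rr ff.
Proof.
split.
  move=> a m n; apply: injective_projections => /=.
    rewrite g_lin sig_lin lmod_helper Zinv_lin //; exact: cen_d.
  exact: g_lin.
split; first by move=> m; exact: (proj1 (Zinv_spec (cen_d m))).
split.
  move=> m n [e1 e2].
  have e : m - sig (g m) = n - sig (g n).
    by rewrite -(proj2 (Zinv_spec (cen_d m))) e1 (proj2 (Zinv_spec (cen_d n))).
  by move: e; rewrite e2 => /addIr.
split.
  move=> x q hx; exists (th x + sig q); rewrite /ff.
  have eg : g (th x + sig q) = q.
    by rewrite (lin_add g_lin) (proj2 (g_ker _) (th_center hx)) g_sig add0r.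
  by rewrite eg addrK Zinv_th.
split.
  move=> b m hm; split; last exact: g_deg.
  apply: Zinv_deg; first exact: cen_d.
  by rewrite memvB // sig_deg // g_deg.
by move=> m n; rewrite /ff /rr /= g_br -br_sig.
Qed.

Lemma main_ex : exists (r : lsT Q -> lsT Q -> lsT L) (f : lsT M -> (lsT L * lsT Q)%type),
    factor_set r /\ iso_ZQr r f.
Proof. by exists rr, ff; split; [exact: rr_fs | exact: ff_iso]. Qed.

End Main.

Theorem lemma3p3 (K : fieldType)
    (hK2 : (2 \notin [pchar K]%R)%N) (hK3 : (3 \notin [pchar K]%R)%N)
    (L M : lieSuper K) :
  is_lie_super L -> is_lie_super M -> stem L -> stem M -> isoclinic L M ->
  forall (Q : lieSuper K) (pi : lsT L -> lsT Q), center_quotient pi ->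
  exists (r : lsT Q -> lsT Q -> lsT L) (f : lsT M -> (lsT L * lsT Q)%type),
    factor_set r /\ iso_ZQr r f.
Proof.
move=> HL HM sL sM [QL [QM [piL [piM [phi [th [cqL [cqM [isop [dth compat]]]]]]]]]] Q pi cq.
exact: (main_ex HL HM sL sM cqL cqM isop dth compat cq).
Qed.
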